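(* Let $\mathcal{A}$ be a central, essential arrangement of hyperplanes in $\mathbb{R}^d$ and fix a chamber $c_0$. Then for chambers $c$, the set $L_1(c_0,c)$ determines $c$ uniquely. Moreover, fixing a minimal gallery $r_0$ from $c_0$ to $-c_0$, for minimal galleries $r$ from $c_0$ to $-c_0$ the set $L_2(r_0,r)$ determines $r$ uniquely.
   Context: A central, essential arrangement is a finite set of linear hyperplanes in $\mathbb{R}^d$ with common intersection $\{0\}$. Chambers are connected components of the complement of the union of the hyperplanes. $L_1(c,c')$ is the set of hyperplanes separating chambers $c,c'$. A minimal gallery from $c$ to $c'$ is a shortest path in the graph on chambers where $c,c'$ are adjacent iff $|L_1(c,c')|=1$; a minimal gallery from $c_0$ to $-c_0$ crosses every hyperplane exactly once. $L_2$ is the set of codimension-two subspaces arising as intersections of hyperplanes of $\mathcal{A}$. For minimal galleries $r,r'$ from $c_0$ to $-c_0$, $L_2(r,r')$ is the set of $X\in L_2$ such that $r$ and $r'$ cross the hyperplanes containing $X$ in different orders. *)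

(* Defs.v *)
From HB Require Import structures.
From mathcomp Require Import all_boot all_order all_algebra.
From mathcomp Require Import all_classical all_reals all_analysis.

Set Implicit Arguments.
Unset Strict Implicit.
Unset Printing Implicit Defensive.

Import Order.TTheory GRing.Theory Num.Theory.
Import numFieldNormedType.Exports.
Local Open Scope classical_set_scope.
Local Open Scope ring_scope.

(* An arrangement of n linear hyperplanes in R^d (vectors = row vectors
   'rV[R]_d, with the product topology of mathcomp-analysis) is given by
   normal vectors a i; hyperplane i is the kernel of x |-> <x, a i>. *)

Definition lin_form (R : realType) (d n : nat) (a : 'I_n -> 'rV[R]_d)
  (i : 'I_n) (x : 'rV[R]_d) : R := (x *m (a i)^T) 0 0.

Definition hyp (R : realType) (d n : nat) (a : 'I_n -> 'rV[R]_d)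
  (i : 'I_n) : set 'rV[R]_d := [set x | lin_form a i x = 0].

Definition arrangement (R : realType) (d n : nat) (a : 'I_n -> 'rV[R]_d) :=
  (forall i, a i != 0) /\ injective (hyp a).

(* Central: all hyperplanes are linear, so they contain 0 (automatic).
   Essential: the common intersection is {0}. *)
Definition essential (R : realType) (d n : nat) (a : 'I_n -> 'rV[R]_d) :=
  [set x | forall i, hyp a i x] = [set 0].

Definition arr_complement (R : realType) (d n : nat) (a : 'I_n -> 'rV[R]_d)
  : set 'rV[R]_d := [set x | forall i, ~ hyp a i x].

Definition is_chamber (R : realType) (d n : nat) (a : 'I_n -> 'rV[R]_d)
  (C : set 'rV[R]_d) :=
  exists x, arr_complement a x /\ C = connected_component (arr_complement a) x.

Definition opp_chamber (R : realType) (d : nat) (C : set 'rV[R]_d)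
  : set 'rV[R]_d := (fun x => - x) @` C.

Definition separates (R : realType) (d n : nat) (a : 'I_n -> 'rV[R]_d)
  (i : 'I_n) (c c' : set 'rV[R]_d) :=
  exists x y, [/\ c x, c' y & lin_form a i x * lin_form a i y < 0].

Definition L1 (R : realType) (d n : nat) (a : 'I_n -> 'rV[R]_d)
  (c c' : set 'rV[R]_d) : {set 'I_n} :=
  [set i | `[< separates a i c c' >]].

Definition adjacent (R : realType) (d n : nat) (a : 'I_n -> 'rV[R]_d)
  (c c' : set 'rV[R]_d) := #|L1 a c c'| = 1%N.

Definition gallery (R : realType) (d n : nat) (a : 'I_n -> 'rV[R]_d)
  (r : seq (set 'rV[R]_d)) (c c' : set 'rV[R]_d) :=
  [/\ r <> [::], head set0 r = c, last set0 r = c',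
      (forall C, C \in r -> is_chamber a C) &
      (forall k, (k.+1 < size r)%N ->
         adjacent a (nth set0 r k) (nth set0 r k.+1))].

Definition minimal_gallery (R : realType) (d n : nat) (a : 'I_n -> 'rV[R]_d)
  (r : seq (set 'rV[R]_d)) (c c' : set 'rV[R]_d) :=
  gallery a r c c' /\
  forall r', gallery a r' c c' -> (size r <= size r')%N.

Definition crosses_at (R : realType) (d n : nat) (a : 'I_n -> 'rV[R]_d)
  (r : seq (set 'rV[R]_d)) (k : nat) (i : 'I_n) :=
  (k.+1 < size r)%N /\ i \in L1 a (nth set0 r k) (nth set0 r k.+1).

Definition crosses_before (R : realType) (d n : nat) (a : 'I_n -> 'rV[R]_d)
  (r : seq (set 'rV[R]_d)) (i j : 'I_n) :=
  exists k l, [/\ (k < l)%N, crosses_at a r k i & crosses_at a r l j].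

Definition codim2_subspace (R : realType) (d : nat) (X : set 'rV[R]_d) :=
  exists B : 'M[R]_d, (\rank B + 2)%N = d /\ X = [set x | (x <= B)%MS].

Definition L2 (R : realType) (d n : nat) (a : 'I_n -> 'rV[R]_d)
  : set (set 'rV[R]_d) :=
  [set X | codim2_subspace X /\
     exists S : {set 'I_n}, X = [set x | forall i, i \in S -> hyp a i x]].

Definition L2g (R : realType) (d n : nat) (a : 'I_n -> 'rV[R]_d)
  (r r' : seq (set 'rV[R]_d)) : set (set 'rV[R]_d) :=
  [set X | L2 a X /\
     exists i j, [/\ X `<=` hyp a i, X `<=` hyp a j,
                     crosses_before a r i j & crosses_before a r' j i]].

(* Main.v *)
Require Import Defs.
From HB Require Import structures.
From mathcomp Require Import all_boot all_order all_algebra.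
From mathcomp Require Import all_classical all_reals all_analysis.
Import numFieldNormedType.Exports.
Local Open Scope classical_set_scope.
Local Open Scope ring_scope.
From mathcomp Require Import ring lra zify.
Set Implicit Arguments.
Unset Strict Implicit.
Unset Printing Implicit Defensive.
Import Order.TTheory GRing.Theory Num.Theory.
Section Geo.
Variables (R : realType) (d n : nat) (a : 'I_n -> 'rV[R]_d).
Local Notation f := (lin_form a).

Lemma fD i x y : f i (x + y) = f i x + f i y.
Proof. by rewrite /lin_form mulmxDl mxE. Qed.
Lemma fZ i k x : f i (k *: x) = k * f i x.
Proof. by rewrite /lin_form -scalemxAl mxE. Qed.
Lemma fN i x : f i (- x) = - f i x.
Proof. by rewrite /lin_form mulNmx mxE. Qed.
Lemma f0 i : f i 0 = 0.
Proof. by rewrite /lin_form mul0mx mxE. Qed.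

Lemma f_cont i : continuous (f i).
Proof.
have -> : f i = (fun x : 'rV[R]_d => \sum_(k <- index_enum 'I_d) x 0 k * (a i)^T k 0).
  by apply: funext => x; rewrite /lin_form mxE.
elim: (index_enum 'I_d) => [|k s IH].
  have -> : (fun x : 'rV[R]_d => \sum_(k <- [::]) x 0 k * (a i)^T k 0) = fun=> 0.
    by apply: funext => x; rewrite big_nil.
  exact: cst_continuous.
have -> : (fun x : 'rV[R]_d => \sum_(j <- k :: s) x 0 j * (a i)^T j 0) =
   (fun x => x 0 k * (a i)^T k 0 + \sum_(j <- s) x 0 j * (a i)^T j 0).
  by apply: funext => x; rewrite big_cons.
move=> x; apply: (@continuousD R R^o _ (fun x : 'rV[R]_d => x 0 k * (a i)^T k 0) (fun x => \sum_(j <- s) x 0 j * (a i)^T j 0)); last exact: IH.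
have := (@continuousM R _ (fun x : 'rV[R]_d => x 0 k) (fun=> (a i)^T k 0) x
  (@coord_continuous R 1 d 0 k x) (@cst_continuous _ R ((a i)^T k 0) x)); by [].

Qed.

Definition comp := arr_complement a.
Definition sc (x : 'rV[R]_d) : set 'rV[R]_d := [set y | forall i, 0 < f i x * f i y].

Lemma compP x i : comp x -> f i x != 0.
Proof. by move=> cx; apply/eqP => h; apply: (cx i). Qed.

Lemma sc_sub x : sc x `<=` comp.
Proof. by move=> y sy i hy; have := sy i; rewrite /hyp /= in hy; rewrite hy mulr0 ltxx. Qed.

Lemma sq_gt0 (r : R) : r != 0 -> 0 < r * r.
Proof. by move=> h; rewrite -expr2 exprn_even_gt0. Qed.

Lemma sc_refl x : comp x -> sc x x.
Proof. by move=> cx i; apply: sq_gt0; apply: compP. Qed.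

Lemma sc_eq x y : sc x y -> sc x = sc y.
Proof.
move=> sxy; apply/seteqP; split => z sz i; have := sxy i; have := sz i; move=> *; nra.
Qed.

Lemma conv_pos (A B t : R) : 0 < A -> 0 < B -> 0 <= t -> t <= 1 -> 0 < (1 - t) * A + t * B.
Proof. move=> *; nra. Qed.

Lemma sc_sub_cc x : comp x -> sc x `<=` connected_component comp x.
Proof.
move=> cx y sy.
pose g := fun t : R => (1 - t) *: x + t *: y.
have gc : continuous g.
  move=> t; have h := (@continuousD R _ _ (fun t : R => (1 - t) *: x) (fun t => t *: y) t); apply: h.
    have h1 := (@continuousZr_tmp R _ _ (fun t : R => 1 - t) x t); apply: h1.
    have h2 := (@continuousB R R^o _ (fun=> 1) id t); apply: h2; first exact: cst_continuous.
    exact: cvg_id.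
  have h3 := (@continuousZr_tmp R _ _ id y t); apply: h3; exact: cvg_id.
have segc : connected (g @` `[0, 1]).
  apply: connected_continuous_connected; first exact: segment_connected.
  exact: continuous_subspaceT.
have segsub : g @` `[0, 1] `<=` comp.
  apply: (subset_trans _ (@sc_sub x)).
  move=> _ [t /= ht <-] i; rewrite /g fD !fZ.
  move: ht; rewrite in_itv /= => /andP[t0 t1].
  have -> : f i x * ((1 - t) * f i x + t * f i y) = (1 - t) * (f i x * f i x) + t * (f i x * f i y) by ring.
  apply: conv_pos; [exact: sq_gt0 (compP i cx)|exact: sy|exact: t0|exact: t1].
apply: (connected_component_max _ segsub segc).
  by exists 0; [rewrite /= in_itv /= lexx ler01|rewrite /g subr0 scale1r scale0r addr0].
by exists 1; [rewrite /= in_itv /= lexx ler01|rewrite /g subrr scale1r scale0r add0r].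
Qed.

Lemma cc_sub_sc x : comp x -> connected_component comp x `<=` sc x.
Proof.
move=> cx y cy i.
have cyc := connected_component_sub cy.
have I : is_interval (f i @` connected_component comp x).
  apply/connected_intervalP; apply: connected_continuous_connected.
    exact: component_connected.
  exact/continuous_subspaceT/f_cont.
have hx := compP i cx; have hy := compP i cyc.
rewrite ltNge; apply/negP => hle.
have [z [cz fz]] : exists z, connected_component comp x z /\ f i z = 0.
  have hx' : (f i @` connected_component comp x) (f i x).
    by exists x => //; apply: connected_component_refl.
  have hy' : (f i @` connected_component comp x) (f i y) by exists y.
  have : (f i @` connected_component comp x) 0.
    have [fx0|fx0] := ltP (f i x) 0.
      apply: (I _ _ hx' hy'); rewrite (ltW fx0) /=.
      rewrite leNgt; apply/negP => fy0; have := sq_gt0 hx; move=> *; nra.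
    apply: (I _ _ hy' hx'); rewrite fx0 andbT.
    rewrite leNgt; apply/negP => fy0.
    have fx0' : 0 < f i x by rewrite lt_neqAle eq_sym hx fx0.
    nra.
  by move=> [z cz fz]; exists z.
by apply: (connected_component_sub cz i).
Qed.

Lemma cc_sc x : comp x -> connected_component comp x = sc x.
Proof. by move=> cx; apply/seteqP; split; [exact: cc_sub_sc|exact: sc_sub_cc]. Qed.

Lemma chamberP C : is_chamber a C -> exists x, comp x /\ C = sc x.
Proof. by move=> [x [cx ->]]; exists x; split => //; rewrite cc_sc. Qed.

Lemma sc_chamber x : comp x -> is_chamber a (sc x).
Proof. by move=> cx; exists x; split => //; rewrite cc_sc. Qed.

Lemma sepP i x y : comp x -> comp y ->
  separates a i (sc x) (sc y) <-> f i x * f i y < 0.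
Proof.
move=> cx cy; split.
  move=> [u [v [su sv h]]]; have := su i; have := sv i => *; nra.
by move=> h; exists x, y; split => //; apply: sc_refl.
Qed.

Lemma L1P i x y : comp x -> comp y ->
  (i \in L1 a (sc x) (sc y)) = (f i x * f i y < 0).
Proof.
move=> cx cy; rewrite inE; apply/idP/idP.
  by move/asboolP/(sepP i cx cy).
by move=> h; apply/asboolP/(sepP i cx cy).
Qed.

End Geo.

Section ChainAll.
Local Close Scope classical_set_scope.
Lemma neq_sym (T : eqType) (x y : T) : x != y -> y != x.
Proof. by rewrite eq_sym. Qed.

Section Chain.
Variable n : nat.

Definition mchain (F : nat -> {set 'I_n}) :=
  [/\ F 0%N = finset.set0, F n = finset.setT,
      forall k, (k < n)%N -> F k \subset F k.+1 &
      forall k, (k < n)%N -> #|F k.+1 :\: F k| = 1%N].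

Definition before (F : nat -> {set 'I_n}) (i j : 'I_n) :=
  exists k, [/\ (k <= n)%N, i \in F k & j \notin F k].

Lemma enter (P : nat -> bool) k m : (k <= m)%N -> ~~ P k -> P m ->
  exists l, [/\ (k <= l)%N, (l < m)%N, ~~ P l & P l.+1].
Proof.
elim: m => [|m IH] km Pk Pm.
  by move: km; rewrite leqn0 => /eqP ek; move: Pm; rewrite -ek (negbTE Pk).
have [Pm'|Pm'] := boolP (P m).
  have km' : (k <= m)%N.
    rewrite leq_eqVlt in km; case/orP: km => [/eqP ek|//].
    by move: Pm; rewrite -ek (negbTE Pk).
  by have [l [? ? ? ?]] := IH km' Pk Pm'; exists l; split => //; rewrite ltnS ltnW.
exists m; split => //.
rewrite leq_eqVlt in km; case/orP: km => [/eqP ek|//].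
by move: Pm; rewrite -ek (negbTE Pk).
Qed.

Variable F : nat -> {set 'I_n}.
Hypothesis hF : mchain F.

Lemma chain_sub k l : (k <= l)%N -> (l <= n)%N -> F k \subset F l.
Proof.
case: hF => _ _ hs _.
move=> kl ln; elim: l kl ln => [|l IH] kl ln.
  by move: kl; rewrite leqn0 => /eqP ->.
rewrite leq_eqVlt in kl; case/orP: kl => [/eqP ->//|kl].
exact: fintype.subset_trans (IH kl (ltnW ln)) (hs _ ln).
Qed.

Lemma chain_card k : (k <= n)%N -> #|F k| = k.
Proof.
case: hF => h0 _ hs hc.
elim: k => [|k IH] kn; first by rewrite h0 cards0.
have := hc _ kn; rewrite -(cardsID (F k) (F k.+1)) (finset.setIidPr (hs _ kn)) IH ?(ltnW kn) //.
by move=> ->; rewrite addn1.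
Qed.

Lemma before_total i j : i != j -> before F i j \/ before F j i.
Proof.
case: hF => h0 hn hs hc => ij.
have e0 : ~~ ((i \in F 0) || (j \in F 0)) by rewrite h0 !inE.
have en : (i \in F n) || (j \in F n) by rewrite hn !inE.
have [l [_ ln Pl Pl1]] := @enter (fun k => (i \in F k) || (j \in F k)) 0 n
  (leq0n _) e0 en.
move: Pl; rewrite negb_or => /andP[il jl].
have : #|F l.+1 :\: F l| = 1%N by apply: hc.
move/eqP/cards1P => [e he].
case/orP: Pl1 => [il1|jl1].
  left; exists l.+1; split => //; apply/negP => jl1.
  have : i \in [set e] by rewrite -he inE il1 il.
  have : j \in [set e] by rewrite -he inE jl1 jl.
  by rewrite !inE => /eqP je /eqP ie; rewrite ie je eqxx in ij.
right; exists l.+1; split => //; apply/negP => il1.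
have : i \in [set e] by rewrite -he inE il1 il.
have : j \in [set e] by rewrite -he inE jl1 jl.
by rewrite !inE => /eqP je /eqP ie; rewrite ie je eqxx in ij.
Qed.

Lemma before_asym i j : before F i j -> before F j i -> False.
Proof.
move=> [k [kn ik jk]] [l [ln jl il]].
have [kl|lk] := leqP k l.
  by have := fintype.subsetP (chain_sub kl ln) _ ik; rewrite (negbTE il).
by have := fintype.subsetP (chain_sub (ltnW lk) kn) _ jl; rewrite (negbTE jk).
Qed.

Lemma before_trans i j k : before F i j -> before F j k -> before F i k.
Proof.
move=> [p [pn ip jp]] [q [qn jq kq]].
have [pq|qp] := leqP p q.
  exists q; split => //; exact: fintype.subsetP (chain_sub pq qn) _ ip.
by have := fintype.subsetP (chain_sub (ltnW qp) pn) _ jq; rewrite (negbTE jp).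
Qed.

Lemma before_neq i j : before F i j -> i != j.
Proof. by move=> [k [_ ik jk]]; apply/eqP => e; move: jk; rewrite -e ik. Qed.

Definition betw (q p s : 'I_n) := forall k, (k <= n)%N ->
  (p \in F k -> s \in F k -> q \in F k) /\ (p \notin F k -> s \notin F k -> q \notin F k).

Lemma betw_before p q s : p != q -> q != s -> betw q p s ->
  (before F p q <-> before F q s).
Proof.
move=> pq qs hb; split.
  move=> [k [kn pk qk]].
  have [//|hsq] := before_total qs.
  move: hsq => [l [ln sl ql]].
  have [kl|lk] := leqP k l.
    have pl := fintype.subsetP (chain_sub kl ln) _ pk.
    by have := (hb l ln).1 pl sl; rewrite (negbTE ql).
  have sk := fintype.subsetP (chain_sub (ltnW lk) kn) _ sl.
  by have := (hb k kn).1 pk sk; rewrite (negbTE qk).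
move=> [k [kn qk sk]].
have [//|hqp] := before_total pq.
move: hqp => [l [ln ql pl]].
have [kl|lk] := leqP k l.
  have pk : p \notin F k by apply/negP => pk; have := fintype.subsetP (chain_sub kl ln) _ pk; rewrite (negbTE pl).
  by have := (hb k kn).2 pk sk; rewrite qk.
have sl : s \notin F l by apply/negP => sl; have := fintype.subsetP (chain_sub (ltnW lk) kn) _ sl; rewrite (negbTE sk).
by have := (hb l ln).2 pl sl; rewrite ql.
Qed.

Lemma six m e1 e2 : m != e1 -> m != e2 -> e1 != e2 -> betw m e1 e2 ->
  let D := before F e1 m in
  [/\ before F m e1 <-> ~ D, before F m e2 <-> D, before F e2 m <-> ~ D,
      before F e1 e2 <-> D & before F e2 e1 <-> ~ D].
Proof.
move=> me1 me2 e12 hb D.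
have hme := @betw_before e1 m e2 (neq_sym me1) me2 hb.
have tot1 := @before_total m e1 me1.
have tot2 := @before_total m e2 me2.
have tot3 := @before_total e1 e2 e12.
have as1 := @before_asym m e1; have as2 := @before_asym m e2; have as3 := @before_asym e1 e2.
have tr1 := @before_trans e1 m e2; have tr2 := @before_trans e2 m e1.
rewrite /D; split; tauto.
Qed.

End Chain.

Section Two.
Variable n : nat.
Variables F0 F : nat -> {set 'I_n}.
Hypotheses (h0 : mchain F0) (h1 : mchain F).

Definition flipped (x y : 'I_n) :=
  (before F0 x y /\ before F y x) \/ (before F0 y x /\ before F x y).

Lemma flip_tri m e1 e2 : m != e1 -> m != e2 -> e1 != e2 ->
  betw F0 m e1 e2 -> betw F m e1 e2 ->
  forall u v, (u = e1 \/ u = m \/ u = e2) -> (v = e1 \/ v = m \/ v = e2) -> u <> v ->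
  (flipped u v <-> (before F0 e1 m <-> ~ before F e1 m)).
Proof.
move=> me1 me2 e12 b0 b1 u v hu hv uv.
have S0 := six h0 me1 me2 e12 b0; have S1 := six h1 me1 me2 e12 b1.
move: S0 S1 => /= [? ? ? ? ?] [? ? ? ? ?].
rewrite /flipped.
have [d0|d0] := pselect (before F0 e1 m); have [d|d] := pselect (before F e1 m);
case: hu => [eu|[eu|eu]]; case: hv => [ev|[ev|ev]]; subst u v;
  try (exfalso; exact: uv erefl); tauto.
Qed.

Lemma flip_tri2 m e1 e2 : m != e1 -> m != e2 -> e1 != e2 ->
  betw F0 m e1 e2 -> betw F m e1 e2 ->
  forall x y u v, (x = e1 \/ x = m \/ x = e2) -> (y = e1 \/ y = m \/ y = e2) -> x <> y ->
  (u = e1 \/ u = m \/ u = e2) -> (v = e1 \/ v = m \/ v = e2) -> u <> v ->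
  flipped x y -> flipped u v.
Proof.
move=> me1 me2 e12 b0 b1 x y u v hx hy xy hu hv uv.
rewrite (flip_tri me1 me2 e12 b0 b1 hx hy xy) (flip_tri me1 me2 e12 b0 b1 hu hv uv).
by [].
Qed.

Lemma flipped_sym x y : flipped x y -> flipped y x.
Proof. rewrite /flipped; tauto. Qed.

Variable I : pred 'I_n.
Hypothesis tri : forall p q s, p \in I -> q \in I -> s \in I ->
  p != q -> q != s -> p != s ->
  [\/ betw F0 q p s /\ betw F q p s, betw F0 p q s /\ betw F p q s |
       betw F0 s p q /\ betw F s p q].

Lemma flip_triple p q s : p \in I -> q \in I -> s \in I ->
  p != q -> q != s -> p != s -> flipped p q -> flipped p s /\ flipped q s.
Proof.
move=> pI qI sI pq qs ps fpq.
have npq : p <> q by apply/eqP. have nqs : q <> s by apply/eqP. have nps : p <> s by apply/eqP.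
have L (x y z : 'I_n) : x = x \/ x = y \/ x = z by left.
have M (x y z : 'I_n) : y = x \/ y = y \/ y = z by right; left.
have Rr (x y z : 'I_n) : z = x \/ z = y \/ z = z by right; right.
case: (tri pI qI sI pq qs ps) => [[b0 b1]|[b0 b1]|[b0 b1]].
- have E := flip_tri2 (neq_sym pq) qs ps b0 b1.
  split; [exact: (E p q p s (L p q s) (M p q s) npq (L p q s) (Rr p q s) nps fpq)|
          exact: (E p q q s (L p q s) (M p q s) npq (M p q s) (Rr p q s) nqs fpq)].
- have E := flip_tri2 pq ps qs b0 b1.
  split; [exact: (E p q p s (M q p s) (L q p s) npq (M q p s) (Rr q p s) nps fpq)|
          exact: (E p q q s (M q p s) (L q p s) npq (L q p s) (Rr q p s) nqs fpq)].
- have E := flip_tri2 (neq_sym ps) (neq_sym qs) pq b0 b1.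
  split; [exact: (E p q p s (L p s q) (Rr p s q) npq (L p s q) (M p s q) nps fpq)|
          exact: (E p q q s (L p s q) (Rr p s q) npq (Rr p s q) (M p s q) nqs fpq)].
Qed.

End Two.


Section Three.
Variable n : nat.

Lemma flip_all (F0 F : nat -> {set 'I_n}) (I : pred 'I_n) :
  mchain F0 -> mchain F ->
  (forall p q s, p \in I -> q \in I -> s \in I ->
  p != q -> q != s -> p != s ->
  [\/ betw F0 q p s /\ betw F q p s, betw F0 p q s /\ betw F p q s |
       betw F0 s p q /\ betw F s p q]) ->
  forall p q, p \in I -> q \in I -> p != q -> flipped F0 F p q ->
  forall u v, u \in I -> v \in I -> u != v -> flipped F0 F u v.
Proof.
move=> h0 h1 tri p q pI qI pq fpq.
have A w : w \in I -> w != p -> w != q -> flipped F0 F p w /\ flipped F0 F q w.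
  move=> wI wp wq; exact: (flip_triple h0 h1 tri pI qI wI pq (neq_sym wq) (neq_sym wp) fpq).
move=> u v uI vI uv.
have [up|up] := eqVneq u p.
  subst u; have [vq|vq] := eqVneq v q; first by subst v.
  by case: (A v vI (neq_sym uv) vq).
have [uq|uq] := eqVneq u q.
  subst u; have [vp|vp] := eqVneq v p; first by subst v; apply: flipped_sym.
  by case: (A v vI vp (neq_sym uv)).
have [vp|vp] := eqVneq v p.
  by subst v; apply: flipped_sym; case: (A u uI up uq).
have [vq|vq] := eqVneq v q.
  by subst v; apply: flipped_sym; case: (A u uI up uq).
have [fpu _] := A u uI up uq.
have pv : p != v by rewrite eq_sym.
have pu : p != u by rewrite eq_sym.
by case: (flip_triple h0 h1 tri pI uI vI pu uv pv fpu).
Qed.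

Lemma chain_det (F G : nat -> {set 'I_n}) : mchain F -> mchain G ->
  (forall i j, before F i j <-> before G i j) ->
  forall k, (k <= n)%N -> F k = G k.
Proof.
move=> hF hG hb k kn.
have sub (A B : nat -> {set 'I_n}) : mchain A -> mchain B ->
    (forall i j, before A i j -> before B i j) -> A k \subset B k.
  move=> hA hB hab; apply/fintype.subsetP => i iA; apply/negPn/negP => iB.
  have : ~~ (B k \subset A k).
    apply/negP => sBA.
    have : A k = B k.
      apply/eqP; rewrite eq_sym eqEcard sBA (chain_card hA kn) (chain_card hB kn) leqnn.
      by [].
    by move=> e; move: iA; rewrite e (negbTE iB).
  case/fintype.subsetPn => j jB jA.
  have bij : before A i j by exists k.
  have bji : before B j i by exists k.
  exact: (before_asym hB (hab _ _ bij) bji).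
apply/eqP; rewrite finset.eqEsubset; apply/andP; split.
  by apply: sub => // i j /hb.
by apply: sub => // i j /hb.
Qed.

Lemma agree_or_flip (F0 F : nat -> {set 'I_n}) (i j : 'I_n) :
  mchain F0 -> mchain F -> i != j ->
  ~ flipped F0 F i j -> (before F i j <-> before F0 i j).
Proof.
move=> h0 h1 ij nf.
have t0 := before_total h0 ij; have t1 := before_total h1 ij.
have a0 := @before_asym _ _ h0 i j; have a1 := @before_asym _ _ h1 i j.
move: nf; rewrite /flipped; tauto.
Qed.

Lemma flip_iff (F0 F : nat -> {set 'I_n}) (i j : 'I_n) :
  mchain F0 -> mchain F -> i != j ->
  flipped F0 F i j -> (before F i j <-> before F0 j i).
Proof.
move=> h0 h1 ij nf.
have t0 := before_total h0 ij; have t1 := before_total h1 ij.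
have a0 := @before_asym _ _ h0 i j; have a1 := @before_asym _ _ h1 i j.
move: nf; rewrite /flipped; tauto.
Qed.

End Three.

End ChainAll.

Lemma mul_neg_xor (R : realType) (u v : R) : u != 0 -> v != 0 ->
  (u * v < 0) = ((u < 0) != (v < 0)).
Proof.
move=> hu hv.
have [u0|u0] := ltP u 0; have [v0|v0] := ltP v 0 => /=.
- by apply/negbTE; rewrite -leNgt; nra.
- have v0' : 0 < v by rewrite lt_neqAle eq_sym hv v0.
  by apply/idP; nra.
- have u0' : 0 < u by rewrite lt_neqAle eq_sym hu u0.
  by apply/idP; nra.
- have v0' : 0 < v by rewrite lt_neqAle eq_sym hv v0.
  have u0' : 0 < u by rewrite lt_neqAle eq_sym hu u0.
  by apply/negbTE; rewrite -leNgt; nra.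
Qed.

Section Gal.
Variables (R : realType) (d n : nat) (a : 'I_n -> 'rV[R]_d).
Local Notation f := (lin_form a).
Variable x0 : 'rV[R]_d.
Hypothesis hx0 : comp a x0.
Local Notation c0 := (sc a x0).

Lemma L1_xor y z : comp a y -> comp a z -> forall i,
  (i \in L1 a (sc a y) (sc a z)) = ((i \in L1 a c0 (sc a y)) != (i \in L1 a c0 (sc a z))).
Proof.
move=> cy cz i; rewrite !L1P //.
rewrite !mul_neg_xor ?(compP i hx0) ?(compP i cy) ?(compP i cz) //.
by case: (f i x0 < 0); case: (f i y < 0); case: (f i z < 0).
Qed.

Lemma chamber_xor C D : is_chamber a C -> is_chamber a D -> forall i,
  (i \in L1 a C D) = ((i \in L1 a c0 C) != (i \in L1 a c0 D)).
Proof.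
move=> /chamberP [y [cy ->]] /chamberP [z [cz ->]]; exact: L1_xor.
Qed.

Lemma F_inj C D : is_chamber a C -> is_chamber a D ->
  L1 a c0 C = L1 a c0 D -> C = D.
Proof.
move=> /chamberP [y [cy ->]] /chamberP [z [cz ->]] e.
apply: sc_eq => i.
have h : (i \in L1 a c0 (sc a y)) = (i \in L1 a c0 (sc a z)) by rewrite e.
move: h; rewrite !L1P // !mul_neg_xor ?(compP i hx0) ?(compP i cy) ?(compP i cz) //.
move=> h.
have : (f i y < 0) = (f i z < 0).
  by move: h; case: (f i x0 < 0); case: (f i y < 0); case: (f i z < 0).
have hy := compP i cy; have hz := compP i cz.
have [y0|y0] := ltP (f i y) 0; have [z0|z0] := ltP (f i z) 0 => //= _.
- by nra.
- have y0' : 0 < f i y by rewrite lt_neqAle eq_sym hy y0.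
  have z0' : 0 < f i z by rewrite lt_neqAle eq_sym hz z0.
  by nra.
Qed.

Lemma comp_opp : comp a (- x0).
Proof. by move=> i; rewrite /hyp /= fN => /eqP; rewrite oppr_eq0 => /eqP; apply: hx0. Qed.

Lemma opp_sc : opp_chamber c0 = sc a (- x0).
Proof.
rewrite /opp_chamber; apply/seteqP; split.
  by move=> _ [y sy <-] i; rewrite !fN mulrNN; apply: sy.
move=> y sy; exists (- y); last by rewrite opprK.
by move=> i; have := sy i; rewrite !fN mulrN mulNr.
Qed.

Lemma F_opp : L1 a c0 (opp_chamber c0) = finset.setT.
Proof.
rewrite opp_sc; apply/setP => i; rewrite finset.in_setT L1P //; last exact: comp_opp.
rewrite fN mulrN oppr_lt0; exact: sq_gt0 (compP i hx0).
Qed.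

Lemma F_c0 : L1 a c0 c0 = finset.set0.
Proof.
apply/setP => i; rewrite finset.in_set0 L1P //; apply/negbTE; rewrite -leNgt; apply/ltW.
exact: sq_gt0 (compP i hx0).
Qed.

Lemma c0_chamber : is_chamber a c0.
Proof. exact: sc_chamber. Qed.

Definition Fr (r : seq (set 'rV[R]_d)) k := L1 a c0 (nth set0 r k).

Lemma card_step (A B D : {set 'I_n}) : (forall i, (i \in D) = ((i \in A) != (i \in B))) ->
  #|D| = 1%N -> (#|B| <= #|A|.+1)%N.
Proof.
move=> hD cD.
have : B \subset A :|: D.
  apply/fintype.subsetP => i iB; rewrite finset.in_setU hD iB.
  by case: (i \in A).
move/subset_leq_card => h; apply: (leq_trans h).
by rewrite -addn1 -cD; exact: (leq_card_setU A D).1.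
Qed.

Section G.
Variable r : seq (set 'rV[R]_d).
Hypothesis hr : gallery a r c0 (opp_chamber c0).

Lemma gal_chamber k : (k < size r)%N -> is_chamber a (nth set0 r k).
Proof. by case: hr => _ _ _ hc _ kr; apply: hc; rewrite mem_nth. Qed.

Lemma gal_step k : (k.+1 < size r)%N ->
  (#|Fr r k.+1| <= #|Fr r k|.+1)%N /\ (#|Fr r k| <= #|Fr r k.+1|.+1)%N.
Proof.
move=> kr; case: hr => _ _ _ _ hadj.
have hD := chamber_xor (gal_chamber (ltnW kr)) (gal_chamber kr).
have cD : #|L1 a (nth set0 r k) (nth set0 r k.+1)| = 1%N by apply: hadj.
split; first exact: (card_step hD cD).
by apply: (card_step _ cD) => i; rewrite hD eq_sym.
Qed.

Lemma gal_F0 : Fr r 0 = finset.set0.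
Proof. by case: hr => hne hh _ _ _; rewrite /Fr nth0 hh F_c0. Qed.

Lemma gal_Flast : Fr r (size r).-1 = finset.setT.
Proof. by case: hr => hne _ hl _ _; rewrite /Fr nth_last hl F_opp. Qed.

Lemma gal_card_le k : (k < size r)%N -> (#|Fr r k| <= k)%N.
Proof.
elim: k => [|k IH] kr; first by rewrite gal_F0 cards0.
have := (gal_step kr).1; move=> h; apply: (leq_trans h); rewrite ltnS.
exact: IH (ltnW kr).
Qed.

Lemma gal_size : (n < size r)%N.
Proof.
case: hr => hne _ _ _ _.
have sr : (0 < size r)%N by case: r hne.
have sr' : ((size r).-1 < size r)%N by rewrite ltn_predL.
have := gal_card_le sr'; rewrite gal_Flast cardsT card_ord.
by case: (size r) sr.
Qed.

End G.
End Gal.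

Lemma card_mono n (A B D : {set 'I_n}) : (forall i, (i \in D) = ((i \in A) != (i \in B))) ->
  #|D| = 1%N -> #|B| = #|A|.+1 -> A \subset B.
Proof.
move=> hD /eqP/cards1P [e De] cB.
apply/fintype.subsetP => i iA; apply/negPn/negP => iB.
have iD : i \in D by rewrite hD iA (negbTE iB).
have ie : i = e by move: iD; rewrite De finset.in_set1 => /eqP.
have : B \subset A.
  apply/fintype.subsetP => j jB; apply/negPn/negP => jA.
  have jD : j \in D by rewrite hD jB (negbTE jA).
  have je : j = e by move: jD; rewrite De finset.in_set1 => /eqP.
  by move: jB; rewrite je -ie (negbTE iB).
move/subset_leq_card; rewrite cB; lia.
Qed.

Section Min.
Variables (R : realType) (d n : nat) (a : 'I_n -> 'rV[R]_d).
Variable x0 : 'rV[R]_d.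
Hypothesis hx0 : comp a x0.
Local Notation c0 := (sc a x0).
Variable r : seq (set 'rV[R]_d).
Hypothesis hr : gallery a r c0 (opp_chamber c0).
Hypothesis hs : size r = n.+1.

Local Notation F := (Fr a x0 r).

Lemma min_card k : (k <= n)%N -> #|F k| = k.
Proof.
move=> kn; apply/eqP; rewrite eqn_leq gal_card_le ?hs //=.
have low m : (m <= n)%N -> (n - m <= #|F (n - m)|)%N.
  elim: m => [|m IH] mn.
    by rewrite subn0 -[X in F X]/((n.+1).-1) -hs gal_Flast // cardsT card_ord.
  have e : ((n - m.+1).+1 = n - m)%N by lia.
  have lt : ((n - m.+1).+1 < size r)%N by rewrite hs; lia.
  have [h _] := gal_step hx0 hr lt.
  rewrite e in h.
  have h2 := IH (ltnW mn).
  lia.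
have := low (n - k)%N (leq_subr _ _).
by rewrite subKn.
Qed.

Lemma min_adj k : (k < n)%N ->
  forall i, (i \in L1 a (nth set0 r k) (nth set0 r k.+1)) = ((i \in F k) != (i \in F k.+1)).
Proof.
move=> kn; apply: chamber_xor => //; apply: (gal_chamber hr); rewrite hs; lia.
Qed.

Lemma min_mono k : (k < n)%N -> F k \subset F k.+1.
Proof.
move=> kn; apply: (card_mono (min_adj kn)).
  case: hr => _ _ _ _ hadj; apply: hadj; rewrite hs; lia.
by rewrite !min_card //; lia.
Qed.

Lemma min_chain : mchain F.
Proof.
split.
- exact: (gal_F0 hx0 hr).
- by rewrite -[X in F X]/((n.+1).-1) -hs (gal_Flast hx0 hr).
- exact: min_mono.
- move=> k kn; rewrite cardsD (finset.setIidPr (min_mono kn)) !min_card //; lia.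
Qed.

Lemma crosses_atP k i : crosses_at a r k i <-> [/\ (k < n)%N, i \in F k.+1 & i \notin F k].
Proof.
rewrite /crosses_at hs ltnS; split.
  move=> [kn]; rewrite min_adj // => hx.
  have sub := fintype.subsetP (min_mono kn) i.
  have h1 : i \in F k.+1.
    by move: hx sub; case: (i \in F k); case: (i \in F k.+1) => //= _ h; have := h isT.
  split => //; move: hx; rewrite h1; by case: (i \in F k).
move=> [kn i1 i0]; split => //; rewrite min_adj // i1.
by rewrite (negbTE i0).
Qed.

Lemma crosses_beforeP i j : crosses_before a r i j <-> before F i j.
Proof.
have hc := min_chain.
split.
  move=> [k [l [kl /crosses_atP [kn ik _] /crosses_atP [ln jl1 jl]]]].
  exists k.+1; split => //; apply/negP => jk.
  by have := fintype.subsetP (chain_sub hc kl (ltnW ln)) _ jk; rewrite (negbTE jl).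
move=> [k [kn ik jk]].
have i0 : i \notin F 0 by rewrite (gal_F0 hx0 hr) finset.in_set0.
have [k' [_ k'k ik' ik'1]] := @enter (fun m => i \in F m) 0 k (leq0n _) i0 ik.
have jn : j \in F n by case: hc => _ -> _ _; rewrite finset.in_setT.
have [l [kl ln jl jl1]] := @enter (fun m => j \in F m) k n kn jk jn.
exists k', l; split.
- exact: leq_trans k'k kl.
- by apply/crosses_atP; split => //; exact: leq_trans k'k kn.
- by apply/crosses_atP.
Qed.

End Min.

Section Lin.
Variables (R : realType) (d n : nat) (a : 'I_n -> 'rV[R]_d).
Local Notation f := (lin_form a).
Hypothesis harr : arrangement a.

Lemma dot_pos (v : 'rV[R]_d) : v != 0 -> 0 < (v *m v^T) 0 0.
Proof.
move=> hv.
have [k hk] : exists k, v 0 k != 0.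
  case: (pselect (exists k, v 0 k != 0)) => // hn; exfalso; move/eqP: hv; apply.
  apply/matrixP => i k; rewrite (ord1 i) mxE; apply/eqP/negPn/negP => h.
  by apply: hn; exists k.
rewrite mxE (bigD1 k) //= mxE.
apply: (@lt_le_trans _ _ (v 0 k * v 0 k)); first exact: sq_gt0.
rewrite lerDl; apply: sumr_ge0 => j _; rewrite mxE -expr2; exact: sqr_ge0.
Qed.

Lemma f_self i : 0 < f i (a i).
Proof. by rewrite /lin_form; apply: dot_pos; case: harr. Qed.

Lemma sep i j : i != j -> exists z, f i z = 0 /\ f j z != 0.
Proof.
move=> ij.
case: (pselect (exists z, f i z = 0 /\ f j z != 0)) => // hn; exfalso.
have H z : f i z = 0 -> f j z = 0.
  move=> hz; apply/eqP/negPn/negP => hjz; apply: hn; exists z; split => //.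
have fi0 : f i (a i) != 0 by rewrite gt_eqF ?f_self.
pose c := f j (a i) / f i (a i).
have lin x : f j x = c * f i x.
  pose x' := x - (f i x / f i (a i)) *: a i.
  have : f i x' = 0 by rewrite /x' fD fN fZ mulfVK // subrr.
  move/H; rewrite /x' fD fN fZ => /eqP; rewrite subr_eq0 => /eqP ->.
  by rewrite /c [RHS]mulrC mulrA [RHS]mulrAC.
have c0 : c != 0.
  apply/eqP => c0; have := f_self j; by rewrite lin c0 mul0r ltxx.
case: harr => _ hinj; move/eqP: ij; apply; apply: hinj.
apply/seteqP; split => x; rewrite /hyp /= => hx.
  exact: H.
by move: hx; rewrite lin => /eqP; rewrite mulf_eq0 (negbTE c0) /= => /eqP.
Qed.

Lemma dual i j : i != j -> exists e1 e2, [/\ f i e1 = 1, f j e1 = 0, f i e2 = 0 & f j e2 = 1].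
Proof.
move=> ij.
have [z [z1 z2]] := sep ij.
have [w [w1 w2]] := sep (neq_sym ij).
exists ((f i w)^-1 *: w), ((f j z)^-1 *: z).
by rewrite !fZ w1 z1 !mulr0 !mulVf.
Qed.

Definition Xs (i j : 'I_n) : set 'rV[R]_d :=
  [set x | forall k, k \in [set i; j]%SET -> hyp a k x].

Lemma XsP i j x : Xs i j x <-> f i x = 0 /\ f j x = 0.
Proof.
split.
  by move=> h; split; apply: h; rewrite !finset.inE eqxx ?orbT.
by move=> [h1 h2] k; rewrite !finset.inE => /orP[] /eqP ->.
Qed.

Lemma span i j p e1 e2 : f i e1 = 1 -> f j e1 = 0 -> f i e2 = 0 -> f j e2 = 1 ->
  Xs i j `<=` hyp a p -> forall x, f p x = f i x * f p e1 + f j x * f p e2.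
Proof.
move=> h1 h2 h3 h4 sub x.
pose x' := x - f i x *: e1 - f j x *: e2.
have : Xs i j x'.
  by apply/XsP; rewrite /x' !fD !fN !fZ h1 h2 h3 h4; split; ring.
move/sub; rewrite /hyp /= /x' !fD !fN !fZ => h.
have : f p x - (f i x * f p e1 + f j x * f p e2) = 0 by rewrite -h; ring.
by move/eqP; rewrite subr_eq0 => /eqP.
Qed.

Lemma mx11_eq (A B : 'M[R]_1) : A 0 0 = B 0 0 -> A = B.
Proof. by move=> e; rewrite [A]mx11_scalar [B]mx11_scalar e. Qed.

Lemma mx11_eq0 (A : 'M[R]_1) : (A == 0) = (A 0 0 == 0).
Proof.
apply/eqP/eqP => [->|h]; first by rewrite mxE.
by apply: mx11_eq; rewrite h mxE.
Qed.

Lemma Xs_L2 i j : i != j -> L2 a (Xs i j).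
Proof.
move=> ij; split; last by exists [set i; j]%SET.
have [e1 [e2 [h1 h2 h3 h4]]] := dual ij.
pose M : 'M[R]_(d, 1 + 1) := row_mx (a i)^T (a j)^T.
exists (kermx M); split.
  have rM : \rank M = 2%N.
    apply/eqP; rewrite eqn_leq rank_leq_col /=.
    pose E : 'M[R]_(1 + 1, d) := col_mx e1 e2.
    have EM : E *m M = 1%:M.
      rewrite /E /M mul_col_mx !mul_mx_row (scalar_mx_block 1 1 1).
      rewrite /block_mx; congr col_mx; congr row_mx; apply: mx11_eq;
        rewrite [RHS]mxE ?eqxx ?mulr1n; [exact: h1|exact: h2|exact: h3|exact: h4].
    by have := mxrankM_maxr E M; rewrite EM mxrank1.
  rewrite mxrank_ker rM; have := rank_leq_row M; rewrite rM => h2d; lia.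
apply/seteqP; split => x.
  move/XsP => [hi hj] /=; rewrite sub_kermx /M mul_mx_row row_mx_eq0 !mx11_eq0.
  by apply/andP; split; apply/eqP; [exact: hi|exact: hj].
rewrite /= sub_kermx /M mul_mx_row row_mx_eq0 !mx11_eq0 => /andP[/eqP hi /eqP hj].
by apply/XsP; split; [exact: hi|exact: hj].
Qed.

End Lin.

Lemma mid_core (R : realType) (lp lq ls wp wq ws : R) : lp * lq < 0 -> ls * lq < 0 ->
  lp * wp + lq * wq + ls * ws = 0 ->
  (wp < 0 -> ws < 0 -> wq < 0) /\ (0 < wp -> 0 < ws -> 0 < wq).
Proof.
move=> h1 h2 e; split => hp hs.
  have : lq * (lq * wq) = - (lp * lq) * wp - (ls * lq) * ws.
    have -> : lq * wq = - (lp * wp) - ls * ws by lra.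
    ring.
  move=> h; nra.
have : lq * (lq * wq) = - (lp * lq) * wp - (ls * lq) * ws.
  have -> : lq * wq = - (lp * wp) - ls * ws by lra.
  ring.
move=> h; nra.
Qed.

Lemma sign3 (R : realType) (lp lq ls Wp Wq Ws : R) : lp != 0 -> lq != 0 -> ls != 0 ->
  0 < Wp -> 0 < Wq -> 0 < Ws -> lp * Wp + lq * Wq + ls * Ws = 0 ->
  [\/ lp * lq < 0 /\ ls * lq < 0, lq * lp < 0 /\ ls * lp < 0 | lp * ls < 0 /\ lq * ls < 0].
Proof.
move=> hp hq hs Wp0 Wq0 Ws0 e.
have [p0|p0] := ltP lp 0; have [q0|q0] := ltP lq 0; have [s0|s0] := ltP ls 0.
- exfalso; nra.
- have s0' : 0 < ls by rewrite lt_neqAle eq_sym hs s0.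
  by constructor 3; split; nra.
- have q0' : 0 < lq by rewrite lt_neqAle eq_sym hq q0.
  by constructor 1; split; nra.
- have q0' : 0 < lq by rewrite lt_neqAle eq_sym hq q0.
  have s0' : 0 < ls by rewrite lt_neqAle eq_sym hs s0.
  by constructor 2; split; nra.
- have p0' : 0 < lp by rewrite lt_neqAle eq_sym hp p0.
  by constructor 2; split; nra.
- have p0' : 0 < lp by rewrite lt_neqAle eq_sym hp p0.
  have s0' : 0 < ls by rewrite lt_neqAle eq_sym hs s0.
  by constructor 1; split; nra.
- have p0' : 0 < lp by rewrite lt_neqAle eq_sym hp p0.
  have q0' : 0 < lq by rewrite lt_neqAle eq_sym hq q0.
  by constructor 3; split; nra.
- have p0' : 0 < lp by rewrite lt_neqAle eq_sym hp p0.
  have q0' : 0 < lq by rewrite lt_neqAle eq_sym hq q0.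
  have s0' : 0 < ls by rewrite lt_neqAle eq_sym hs s0.
  exfalso; nra.
Qed.

Section Betw.
Variables (R : realType) (d n : nat) (a : 'I_n -> 'rV[R]_d).
Local Notation f := (lin_form a).
Hypothesis harr : arrangement a.
Variable x0 : 'rV[R]_d.
Hypothesis hx0 : comp a x0.
Local Notation c0 := (sc a x0).

Definition gbetw (q p s : 'I_n) := forall y, comp a y ->
  (p \in L1 a c0 (sc a y) -> s \in L1 a c0 (sc a y) -> q \in L1 a c0 (sc a y)) /\
  (p \notin L1 a c0 (sc a y) -> s \notin L1 a c0 (sc a y) -> q \notin L1 a c0 (sc a y)).

Lemma gbetw_of q p s (lp lq ls : R) :
  (forall y, lp * (f p x0 * f p y) + lq * (f q x0 * f q y) + ls * (f s x0 * f s y) = 0) ->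
  lp * lq < 0 -> ls * lq < 0 -> gbetw q p s.
Proof.
move=> rel h1 h2 y cy; rewrite !L1P //.
have [A B] := mid_core h1 h2 (rel y).
have nz k : f k x0 * f k y != 0 by rewrite mulf_neq0 // compP.
split; first exact: A.
rewrite -!leNgt !le_eqVlt !(eq_sym 0) !(negbTE (nz _)) /=; exact: B.
Qed.

Variables (i j : 'I_n) (e1 e2 : 'rV[R]_d).
Hypotheses (h1 : f i e1 = 1) (h2 : f j e1 = 0) (h3 : f i e2 = 0) (h4 : f j e2 = 1).
Local Notation al k := (f k e1).
Local Notation be k := (f k e2).

Lemma nz_coef k : Xs a i j `<=` hyp a k -> al k != 0 \/ be k != 0.
Proof.
move=> sub; case: (pselect (al k != 0)) => [?|/negP/negPn/eqP ha]; first by left.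
case: (pselect (be k != 0)) => [?|/negP/negPn/eqP hb]; first by right.
exfalso; have := f_self harr k.
by rewrite (span h1 h2 h3 h4 sub) ha hb !mulr0 addr0 ltxx.
Qed.

Lemma hyp_sub q s : Xs a i j `<=` hyp a q -> Xs a i j `<=` hyp a s ->
  al q * be s - al s * be q = 0 -> hyp a q `<=` hyp a s.
Proof.
move=> sq ss det x; rewrite /hyp /= => hq.
have Eq := span h1 h2 h3 h4 sq x; have Es := span h1 h2 h3 h4 ss x.
have e1' : al q * f s x = al s * f q x + f j x * (al q * be s - al s * be q).
  by rewrite Eq Es; ring.
have e2' : be q * f s x = be s * f q x - f i x * (al q * be s - al s * be q).
  by rewrite Eq Es; ring.
rewrite hq det !mulr0 addr0 subr0 in e1' e2'.
case: (nz_coef sq) => h.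
  by move: e1'; move/eqP; rewrite mulf_eq0 (negbTE h) => /eqP.
by move: e2'; move/eqP; rewrite mulf_eq0 (negbTE h) => /eqP.
Qed.

Lemma det_nz q s : q != s -> Xs a i j `<=` hyp a q -> Xs a i j `<=` hyp a s ->
  al q * be s - al s * be q != 0.
Proof.
move=> qs sq ss; apply/eqP => det.
case: harr => _ hinj; move/eqP: qs; apply; apply: hinj.
apply/seteqP; split; first exact: hyp_sub.
apply: hyp_sub => //.
have -> : al s * be q - al q * be s = - (al q * be s - al s * be q) by ring.
by rewrite det oppr0.
Qed.

Lemma tri_geo p q s : Xs a i j `<=` hyp a p -> Xs a i j `<=` hyp a q ->
  Xs a i j `<=` hyp a s -> p != q -> q != s -> p != s ->
  [\/ gbetw q p s, gbetw p q s | gbetw s p q].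
Proof.
move=> sp sq ss pq qs ps.
pose cp := al q * be s - al s * be q.
pose cq := al s * be p - al p * be s.
pose cs := al p * be q - al q * be p.
have rel y : cp * f p y + cq * f q y + cs * f s y = 0.
  rewrite (span h1 h2 h3 h4 sp y) (span h1 h2 h3 h4 sq y) (span h1 h2 h3 h4 ss y).
  rewrite /cp /cq /cs; ring.
have ncp : cp != 0 by apply: det_nz.
have ncq : cq != 0 by apply: det_nz => //; rewrite eq_sym.
have ncs : cs != 0 by apply: det_nz.
have fx k : f k x0 != 0 by apply: compP.
pose lp := cp / f p x0; pose lq := cq / f q x0; pose ls := cs / f s x0.
have rel2 y : lp * (f p x0 * f p y) + lq * (f q x0 * f q y) + ls * (f s x0 * f s y) = 0.
  rewrite -(rel y) /lp /lq /ls !mulrA !mulfVK //.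
have nlp : lp != 0 by rewrite mulf_neq0 // invr_eq0.
have nlq : lq != 0 by rewrite mulf_neq0 // invr_eq0.
have nls : ls != 0 by rewrite mulf_neq0 // invr_eq0.
have W k : 0 < f k x0 * f k x0 by apply: sq_gt0.
case: (sign3 nlp nlq nls (W p) (W q) (W s) (rel2 x0)) => [[a1 a2]|[a1 a2]|[a1 a2]].
- by constructor 1; apply: (gbetw_of rel2).
- constructor 2; apply: (@gbetw_of p q s lq lp ls) => // y.
  by rewrite -(rel2 y); ring.
- constructor 3; apply: (@gbetw_of s p q lp ls lq) => // y.
  by rewrite -(rel2 y); ring.
Qed.

End Betw.

Section Avoid.
Variables (R : realType) (d : nat).

Definition dotv (v w : 'rV[R]_d) := (w *m v^T) 0 0.

Lemma dot_sym v w : dotv v w = dotv w v.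
Proof. rewrite /dotv !mxE; apply: eq_bigr => k _; by rewrite ?mxE mulrC. Qed.

Lemma dotvD v w1 w2 : dotv v (w1 + w2) = dotv v w1 + dotv v w2.
Proof. by rewrite /dotv mulmxDl mxE. Qed.

Lemma dotvZ v k w : dotv v (k *: w) = k * dotv v w.
Proof. by rewrite /dotv -scalemxAl mxE. Qed.

Lemma dotvB v w1 w2 : dotv v (w1 - w2) = dotv v w1 - dotv v w2.
Proof. by rewrite dotvD -scaleN1r dotvZ mulN1r. Qed.

Variables (T : finType) (g : T -> 'rV[R]_d).
Hypothesis gnz : forall t, g t != 0.

Lemma avoid_seq (s : seq T) : exists w, forall t, t \in s -> dotv (g t) w != 0.
Proof.
elim: s => [|t s [w hw]]; first by exists 0.
have [ht|ht] := eqVneq (dotv (g t) w) 0; last first.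
  by exists w => t'; rewrite inE => /orP[/eqP ->|/hw].
pose u := g t.
pose rat t' := `|dotv (g t') w / dotv (g t') u|.
pose lam := 1 + \sum_(t' : T) rat t'.
have rat_le t' : rat t' <= \sum_(t' : T) rat t'.
  rewrite (bigD1 t') //= lerDl; apply: sumr_ge0 => ? _; exact: normr_ge0.
have lam_gt t' : rat t' < lam by rewrite /lam ltr_pwDl // ltr01.
have lam0 : 0 < lam by apply: le_lt_trans (lam_gt t); exact: normr_ge0.
exists (w + lam *: u) => t'; rewrite inE => /orP[/eqP ->|ts].
  rewrite dotvD dotvZ ht add0r mulf_neq0 //; first by rewrite gt_eqF.
  rewrite /u; apply: lt0r_neq0; exact: dot_pos (gnz t).
rewrite dotvD dotvZ.
have [hu|hu] := eqVneq (dotv (g t') u) 0.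
  by rewrite hu mulr0 addr0 hw.
apply/eqP => e.
have : lam = - (dotv (g t') w / dotv (g t') u).
  by apply: (mulIf hu); rewrite mulNr mulfVK // -(subr0 (lam * _)) -e; ring.
move=> el; have := lam_gt t'; rewrite /rat el.
by rewrite ltNge => /negP; apply; rewrite -normrN ler_norm.
Qed.

Lemma avoid : exists w, forall t, dotv (g t) w != 0.
Proof.
have [w hw] := avoid_seq (enum T); exists w => t; apply: hw; by rewrite mem_enum.
Qed.

End Avoid.

Section Line.
Variables (R : realType) (d n : nat) (a : 'I_n -> 'rV[R]_d).
Local Notation f := (lin_form a).
Hypothesis harr : arrangement a.
Variable x0 : 'rV[R]_d.
Hypothesis hx0 : comp a x0.
Local Notation c0 := (sc a x0).

Lemma dot0 (w : 'rV[R]_d) : dotv 0 w = 0.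
Proof. by rewrite /dotv trmx0 mulmx0 mxE. Qed.

Lemma gen_w : exists w, forall i j, i != j -> f i x0 * f j w - f j x0 * f i w != 0.
Proof.
pose g := fun t : 'I_n * 'I_n => if t.1 == t.2 then a t.1
  else f t.1 x0 *: a t.2 - f t.2 x0 *: a t.1.
have gdot i j w : i != j -> dotv (g (i, j)) w = f i x0 * f j w - f j x0 * f i w.
  by move=> ij; rewrite /g /= (negbTE ij) dot_sym dotvB !dotvZ [dotv w (a j)]dot_sym [dotv w (a i)]dot_sym.
have gnz t : g t != 0.
  case: t => i j; rewrite /g /=.
  have [eij|ij] := eqVneq i j.
    by case: harr => h _; apply: h.
  rewrite /=.
  apply/eqP => g0.
  have H x : f i x0 * f j x = f j x0 * f i x.
    have := gdot i j x ij; rewrite [g (i, j)]/g /= (negbTE ij) g0 dot0 => e.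
    by apply/eqP; rewrite -subr_eq0 -e.
  case: harr => _ hinj; move/eqP: ij; apply; apply: hinj.
  have hi := compP i hx0; have hj := compP j hx0.
  apply/seteqP; split => x; rewrite /hyp /= => hx.
    move: (H x); rewrite hx mulr0 => /eqP; rewrite mulf_eq0 (negbTE hi) /= => /eqP //.
  move: (H x); rewrite hx mulr0 => /esym/eqP; rewrite mulf_eq0 (negbTE hj) /= => /eqP //.
have [w hw] := avoid gnz.
by exists w => i j ij; have := hw (i, j); rewrite gdot.
Qed.

Lemma gen_w2 : exists w, (forall i j, i != j -> f i x0 * f j w - f j x0 * f i w != 0)
  /\ (forall i, `|f i w| < `|f i x0|).
Proof.
have [w hw] := gen_w.
pose D := 1 + \sum_(i : 'I_n) `|f i w| / `|f i x0|.
have nx i : 0 < `|f i x0| by rewrite normr_gt0 compP.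
have S0 : 0 <= \sum_(i : 'I_n) `|f i w| / `|f i x0|.
  by apply: sumr_ge0 => i _; rewrite divr_ge0 // ltW.
have Dpos : 0 < D by rewrite /D; lra.
exists (D^-1 *: w); split.
  move=> i j ij; rewrite !fZ.
  have -> : f i x0 * (D^-1 * f j w) - f j x0 * (D^-1 * f i w) =
    D^-1 * (f i x0 * f j w - f j x0 * f i w) by ring.
  apply: mulf_neq0; last exact: hw.
  by rewrite invr_eq0 gt_eqF.
move=> i; rewrite fZ normrM ger0_norm ?invr_ge0 ?ltW // mulrC ltr_pdivrMr //.
have le1 : `|f i w| / `|f i x0| <= \sum_(i : 'I_n) `|f i w| / `|f i x0|.
  rewrite (bigD1 i) //= lerDl; apply: sumr_ge0 => k _; rewrite divr_ge0 // ltW.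
have e : `|f i w| = `|f i w| / `|f i x0| * `|f i x0| by rewrite mulfVK // gt_eqF.
rewrite {1}e [X in X < _]mulrC ltr_pM2l //.
rewrite /D; lra.
Qed.

Section W.
Variable w : 'rV[R]_d.
Hypothesis hw1 : forall i j, i != j -> f i x0 * f j w - f j x0 * f i w != 0.
Hypothesis hw2 : forall i, `|f i w| < `|f i x0|.

Definition A i := f i x0.
Definition B i := f i w - 2 * A i.
Definition tt i := - A i / B i.
Definition pt (t : R) := (1 - 2 * t) *: x0 + t *: w.

Lemma fp i t : f i (pt t) = A i + t * B i.
Proof. rewrite /pt fD !fZ /B /A; ring. Qed.

Lemma Afw i : A i * f i w < A i * A i.
Proof.
have h := hw2 i; have hA := compP i hx0.
have e1 : A i * f i w <= `|A i| * `|f i w| by rewrite -normrM ler_norm.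
have e2 : `|A i| * `|f i w| < `|A i| * `|A i| by rewrite ltr_pM2l // normr_gt0.
have e3 : `|A i| * `|A i| = A i * A i.
  by rewrite -normrM ger0_norm // -expr2 sqr_ge0.
lra.
Qed.

Lemma AB i : A i * B i < 0.
Proof.
have := Afw i; have := sq_gt0 (compP i hx0); rewrite -/(A i) /B => *; nra.
Qed.

Lemma Bnz i : B i != 0.
Proof. by apply/eqP => e; have := AB i; rewrite e mulr0 ltxx. Qed.

Lemma fp_tt i t : f i (pt t) = B i * (t - tt i).
Proof.
rewrite fp /tt; field; exact: Bnz.
Qed.

Lemma Ap_neg i t : (A i * f i (pt t) < 0) = (tt i < t).
Proof. by rewrite fp_tt mulrA nmulr_rlt0 ?AB // subr_gt0. Qed.

Lemma comp_p t : (forall i, tt i != t) -> comp a (pt t).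
Proof.
move=> h i; rewrite /hyp /= fp_tt => /eqP; rewrite mulf_eq0 (negbTE (Bnz i)) /=.
by rewrite subr_eq0 eq_sym (negbTE (h i)).
Qed.

Lemma tt_inj i j : i != j -> tt i != tt j.
Proof.
move=> ij; apply/eqP => e.
have e' : A i / B i = A j / B j by apply: oppr_inj; rewrite -!mulNr.
have : A i * B j - A j * B i = 0.
  rewrite -[A i](mulfVK (Bnz i)) -[A j](mulfVK (Bnz j)) e'; ring.
have -> : A i * B j - A j * B i = f i x0 * f j w - f j x0 * f i w by rewrite /B /A; ring.
by move/eqP; rewrite (negbTE (hw1 ij)).
Qed.

Lemma tt_lt1 i : tt i < 1.
Proof.
rewrite -Ap_neg fp mul1r /B.
have := Afw i; move=> *; lra.
Qed.

Lemma Fmem t : (forall i, tt i != t) -> forall i,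
  (i \in L1 a c0 (sc a (pt t))) = (tt i < t).
Proof. by move=> ht i; rewrite L1P //; [exact: Ap_neg|exact: comp_p]. Qed.

Lemma gal_line k : forall t, (forall i, tt i != t) -> #|[set i | tt i < t]%SET| = k ->
  exists g, gallery a g c0 (sc a (pt t)) /\ size g = k.+1.
Proof.
elim: k => [|k IH] t ht hk.
  have e : sc a (pt t) = c0.
    apply: (F_inj hx0); [exact: sc_chamber (comp_p ht)| exact: c0_chamber|].
    rewrite F_c0 //; apply/finset.setP => i; rewrite (Fmem ht) finset.in_set0.
    move: (cards0_eq hk) => /setP /(_ i); by rewrite finset.inE finset.in_set0.
  exists [:: c0]; split => //; rewrite e; split => //.
  by move=> C; rewrite inE => /eqP ->; exact: c0_chamber.
set S := [set i | tt i < t]%SET.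
have memS j : (j \in S) = (tt j < t) by rewrite /S finset.inE.
have : (0 < #|S|)%N by rewrite hk.
case/card_gt0P => i0 i0S.
case: (Order.TotalTheory.arg_maxP tt i0S) => im imS imax.
have imt : tt im < t by rewrite -memS; exact: imS.
have ltim j : j \in S -> j != im -> tt j < tt im.
  move=> jS jn; have le : tt j <= tt im := imax j jS.
  by rewrite lt_neqAle le andbT; exact: tt_inj jn.
set S' := [set j | tt j < tt im]%SET.
have memS' j : (j \in S') = (tt j < tt im) by rewrite /S' finset.inE.
have [t' [t'lt H1 H2]] : exists t', [/\ t' < tt im,
    forall j, (tt j < t') = (j \in S) && (j != im) & forall j, tt j != t'].
  case: (set_0Vmem S') => [S'0|[jm jmS']].
    exists (tt im - 1); split.
    - lra.
    - move=> j; apply/idP/idP => [h|/andP[jS jn]].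
        have : j \in S' by rewrite memS'; lra.
        by rewrite S'0 finset.in_set0.
      have : j \in S' by rewrite memS' ltim.
      by rewrite S'0 finset.in_set0.
    - move=> j; apply/eqP => e.
      have : j \in S' by rewrite memS' e; lra.
      by rewrite S'0 finset.in_set0.
  case: (Order.TotalTheory.arg_maxP tt jmS') => jm2 jm2S' jmax.
  have jlt : tt jm2 < tt im by rewrite -memS'; exact: jm2S'.
  exists ((tt jm2 + tt im) / 2); split.
  - lra.
  - move=> j; apply/idP/idP => [h|/andP[jS jn]].
      have hj : tt j < tt im by lra.
      apply/andP; split; first by rewrite memS; lra.
      by apply/eqP => e; move: hj; rewrite e ltxx.
    have : j \in S' by rewrite memS' ltim.
    move/jmax => hj; have hj' : tt j <= tt jm2 := hj; lra.
  - move=> j; apply/eqP => e.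
    have : j \in S' by rewrite memS' e; lra.
    move/jmax => hj; have hj' : tt j <= tt jm2 := hj.
    have : tt jm2 < tt jm2 by lra.
    by rewrite ltxx.
have hk' : #|[set i | tt i < t']%SET| = k.
  have -> : [set i | tt i < t']%SET = S :\ im.
    by apply/setP => j; rewrite finset.in_setD1 finset.inE H1 andbC.
  have imS' : im \in S := imS.
  by move: (cardsD1 im S); rewrite imS' hk add1n => -[->].
have [g' [hg' sg']] := IH t' H2 hk'.
exists (rcons g' (sc a (pt t))); split; last by rewrite size_rcons sg'.
case: hg' => ne hh hl hc hadj.
split.
- by case: (g').
- by move: ne hh; case: (g').
- by rewrite last_rcons.
- move=> C; rewrite mem_rcons inE => /orP[/eqP ->|/hc //].
  exact: sc_chamber (comp_p ht).
- move=> m; rewrite size_rcons ltnS => hm.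
  have [hm'|hm'] := ltnP m.+1 (size g').
    by rewrite !nth_rcons hm' (ltnW hm'); exact: hadj.
  have em : m.+1 = size g' by lia.
  rewrite !nth_rcons em ltnn eqxx leqnn.
  have -> : nth set0 g' m = sc a (pt t') by rewrite -hl -nth_last -em.
  apply/eqP/cards1P; exists im; apply/setP => j.
  rewrite (L1_xor hx0 (comp_p H2) (comp_p ht)) (Fmem H2) (Fmem ht) H1 finset.in_set1.
  rewrite finset.inE.
  have [->|jn] := eqVneq j im; first by rewrite imt.
  by rewrite andbT; case: (tt j < t).
Qed.

End W.

Lemma exists_gal : exists g, gallery a g c0 (opp_chamber c0) /\ size g = n.+1.
Proof.
have [w [hw1 hw2]] := gen_w2.
have ht i : tt w i != 1 by rewrite lt_eqF // (tt_lt1 hw2).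
have hk : #|[set i | tt w i < 1]%SET| = n.
  have -> : [set i | tt w i < 1]%SET = finset.setT.
    by apply/setP => i; rewrite finset.inE finset.in_setT (tt_lt1 hw2).
  by rewrite cardsT card_ord.
have [g [hg sg]] := gal_line hw1 hw2 ht hk.
exists g; split => //.
have -> : opp_chamber c0 = sc a (pt w 1).
  apply: (F_inj hx0).
  - rewrite opp_sc; exact: sc_chamber (comp_opp hx0).
  - exact: sc_chamber (comp_p hw2 ht).
  rewrite F_opp //; apply/setP => i; rewrite finset.in_setT (Fmem hw2 ht).
  by rewrite (tt_lt1 hw2).
by [].
Qed.

End Line.

Section Final.
Variables (R : realType) (d n : nat) (a : 'I_n -> 'rV[R]_d).
Hypothesis harr : arrangement a.
Variable x0 : 'rV[R]_d.
Hypothesis hx0 : comp a x0.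
Local Notation c0 := (sc a x0).

Hypothesis hex : exists g, gallery a g c0 (opp_chamber c0) /\ size g = n.+1.

Lemma min_size r : minimal_gallery a r c0 (opp_chamber c0) -> size r = n.+1.
Proof.
move=> [hr hmin]; have [g [hg sg]] := hex.
have := hmin g hg; have := gal_size hx0 hr; rewrite sg; lia.
Qed.

Lemma gb_chain r q p s : gallery a r c0 (opp_chamber c0) -> size r = n.+1 ->
  gbetw a x0 q p s -> betw (Fr a x0 r) q p s.
Proof.
move=> hr hs hb k kn.
have : is_chamber a (nth set0 r k) by apply: (gal_chamber hr); rewrite hs ltnS.
move/chamberP => [y [cy ey]]; rewrite /Fr ey; exact: hb.
Qed.

Theorem part2 r0 : minimal_gallery a r0 c0 (opp_chamber c0) ->
  forall r r', minimal_gallery a r c0 (opp_chamber c0) ->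
  minimal_gallery a r' c0 (opp_chamber c0) ->
  L2g a r0 r = L2g a r0 r' -> r = r'.
Proof.
move=> hr0 r r' hr hr' hL.
have s0 := min_size hr0; have s1 := min_size hr; have s2 := min_size hr'.
have [g0 _] := hr0; have [g1 _] := hr; have [g2 _] := hr'.
pose F0 := Fr a x0 r0; pose F1 := Fr a x0 r; pose F2 := Fr a x0 r'.
have m0 : mchain F0 := min_chain hx0 g0 s0.
have m1 : mchain F1 := min_chain hx0 g1 s1.
have m2 : mchain F2 := min_chain hx0 g2 s2.
have cb0 := crosses_beforeP hx0 g0 s0.
have cb1 := crosses_beforeP hx0 g1 s1.
have cb2 := crosses_beforeP hx0 g2 s2.
have key : forall i j, before F1 i j <-> before F2 i j.
  move=> i j.
  have [eij|ij] := eqVneq i j.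
    subst j; split => h; have := before_neq h; by rewrite eqxx.
  have [e1 [e2 [h1 h2 h3 h4]]] := dual harr ij.
  pose X := Xs a i j.
  pose I := [pred k | `[< X `<=` hyp a k >]].
  have iI : i \in I.
    by apply/asboolP => x /(XsP a i j x) [].
  have jI : j \in I.
    by apply/asboolP => x /(XsP a i j x) [].
  have tri (F : nat -> {set 'I_n}) rr : F = Fr a x0 rr ->
      gallery a rr c0 (opp_chamber c0) -> size rr = n.+1 ->
      forall p q s, p \in I -> q \in I -> s \in I -> p != q -> q != s -> p != s ->
      [\/ betw F0 q p s /\ betw F q p s, betw F0 p q s /\ betw F p q s |
          betw F0 s p q /\ betw F s p q].
    move=> -> grr srr p q s pI qI sI pq qs ps.
    move/asboolP: pI => pI; move/asboolP: qI => qI; move/asboolP: sI => sI.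
    case: (tri_geo harr hx0 h1 h2 h3 h4 pI qI sI pq qs ps) => hb.
    - by constructor 1; split; apply: gb_chain.
    - by constructor 2; split; apply: gb_chain.
    - by constructor 3; split; apply: gb_chain.
  have L2X : L2 a X by apply: Xs_L2.
  have E (F : nat -> {set 'I_n}) rr : (forall i j, crosses_before a rr i j <-> before F i j) ->
      L2g a r0 rr X <-> exists p q, [/\ p \in I, q \in I & before F0 p q /\ before F q p].
    move=> cbr; split.
      move=> [_ [p [q [Xp Xq c1 c2]]]]; exists p, q; split.
      - by apply/asboolP.
      - by apply/asboolP.
      - by split; [apply/cb0|apply/cbr].
    move=> [p [q [pI qI [b1 b2]]]]; split => //.
    exists p, q; split.
    - by move/asboolP: pI.
    - by move/asboolP: qI.
    - by apply/cb0.
    - by apply/cbr.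
  have EE : L2g a r0 r X <-> L2g a r0 r' X by rewrite hL.
  rewrite (E F1 r cb1) (E F2 r' cb2) in EE.
  case: (pselect (exists p q, [/\ p \in I, q \in I & before F0 p q /\ before F1 q p])) => hA.
    have hA' := (EE.1 hA).
    have fl (F : nat -> {set 'I_n}) rr : F = Fr a x0 rr ->
        gallery a rr c0 (opp_chamber c0) -> size rr = n.+1 ->
        (exists p q, [/\ p \in I, q \in I & before F0 p q /\ before F q p]) ->
        flipped F0 F i j.
      move=> -> grr srr [p [q [pI qI [b1 b2]]]].
      have mF := min_chain hx0 grr srr.
      apply: (flip_all m0 mF (tri _ rr erefl grr srr) pI qI (before_neq b1)) => //.
      by left.
    have f1 := fl F1 r erefl g1 s1 hA.
    have f2 := fl F2 r' erefl g2 s2 hA'.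
    rewrite (flip_iff m0 m1 ij f1) (flip_iff m0 m2 ij f2) //.
  have hB : ~ exists p q, [/\ p \in I, q \in I & before F0 p q /\ before F2 q p].
    by move=> h; apply: hA; apply/EE.
  have nf1 : ~ flipped F0 F1 i j.
    case=> [[b1 b2]|[b1 b2]]; apply: hA; [exists i, j|exists j, i]; by split.
  have nf2 : ~ flipped F0 F2 i j.
    case=> [[b1 b2]|[b1 b2]]; apply: hB; [exists i, j|exists j, i]; by split.
  by rewrite (agree_or_flip m0 m1 ij nf1) (agree_or_flip m0 m2 ij nf2).
have eqF := chain_det m1 m2 key.
apply: (@eq_from_nth _ set0); first by rewrite s1 s2.
move=> k kr; rewrite s1 ltnS in kr.
apply: (F_inj hx0); [apply: (gal_chamber g1); rewrite s1 ltnS //|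
                     apply: (gal_chamber g2); rewrite s2 ltnS //|].
exact: eqF.
Qed.

End Final.

Unset Implicit Arguments.

Theorem proposition2p3 (R : realType) (d n : nat) (a : 'I_n -> 'rV[R]_d) :
  arrangement a -> essential a ->
  forall c0 : set 'rV[R]_d, is_chamber a c0 ->
  (forall c c' : set 'rV[R]_d, is_chamber a c -> is_chamber a c' ->
     L1 a c0 c = L1 a c0 c' -> c = c') /\
  (forall r0 : seq (set 'rV[R]_d),
     minimal_gallery a r0 c0 (opp_chamber c0) ->
     forall r r' : seq (set 'rV[R]_d),
       minimal_gallery a r c0 (opp_chamber c0) ->
       minimal_gallery a r' c0 (opp_chamber c0) ->
       L2g a r0 r = L2g a r0 r' -> r = r').
Proof.
move=> harr _ c0 hc0.
have [x0 [hx0 ->]] := chamberP hc0.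
split.
- by move=> c c' hc hc' e; exact: (F_inj hx0 hc hc' e).
- exact: (part2 harr hx0 (exists_gal harr hx0)).
Qed.
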